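(* Let $(L,\preceq,\bot,\top)$ be a bounded lattice with at least three elements and let $K$ be a block of $L$. If $(L\setminus K)\not\subseteq\{\bot,\top\}$, then $P=(L\setminus K)\cup\{\bot,\top\}$ is a complete block of $L$. Moreover, $L$ can be decomposed into the independent blocks $K$ and $P$, i.e. $K$ and $P$ are independent and $K\cup P=L$.
   Context: For $k\in L$ let ${\uparrow}k=\{x\in L\mid k\preceq x\}$ and ${\downarrow}k=\{x\in L\mid x\preceq k\}$. A block of $L$ is a sublattice $K\subsetneq L$ (a proper subset) such that $K\setminus\{\bot,\top\}\neq\varnothing$ and $({\uparrow}k\cup{\downarrow}k)\setminus\{\bot,\top\}\subseteq K$ for every $k\in K\setminus\{\bot,\top\}$. A block is complete if it contains $\bot$ and $\top$. Two blocks $K_1,K_2$ are independent if $K_1\cap K_2\subseteq\{\bot,\top\}$. *)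

(* Defs.v *)
From mathcomp Require Import all_boot all_order.
Set Implicit Arguments. Unset Strict Implicit. Unset Printing Implicit Defensive.
Import Order.TTheory.
Local Open Scope order_scope.

Section Blocks.
Context {disp : Order.disp_t} {L : tbLatticeType disp}.

(* Subsets of L are predicates L -> Prop (L may be infinite). *)

Definition sublattice (K : L -> Prop) : Prop :=
  forall x y, K x -> K y -> K (x `&` y) /\ K (x `|` y).

Definition upset (k : L) : L -> Prop := fun x => k <= x.
Definition downset (k : L) : L -> Prop := fun x => x <= k.

Definition is_bot_or_top (x : L) : Prop := x = \bot \/ x = \top.

Definition is_block (K : L -> Prop) : Prop :=
  [/\ sublattice K,
      (exists x, ~ K x),
      (exists k, K k /\ ~ is_bot_or_top k) &
      (forall k, K k -> ~ is_bot_or_top k ->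
         forall x, (upset k x \/ downset k x) -> ~ is_bot_or_top x -> K x)].

Definition complete_block (K : L -> Prop) : Prop :=
  [/\ is_block K, K \bot & K \top].

Definition independent_blocks (K1 K2 : L -> Prop) : Prop :=
  forall x, K1 x -> K2 x -> is_bot_or_top x.

End Blocks.

(* Main.v *)
Require Import Defs.
From mathcomp Require Import all_boot all_order.
From Stdlib Require Import Classical.
Import Order.TTheory.
Local Open Scope order_scope.

Lemma bt_dec (disp : Order.disp_t) (L : tbLatticeType disp) (x : L) :
  is_bot_or_top x \/ ~ is_bot_or_top x.
Proof. apply: classic. Qed.

Theorem proposition21 (disp : Order.disp_t) (L : tbLatticeType disp)
    (K : L -> Prop) :
  (exists a b c : L, [/\ a <> b, a <> c & b <> c]) ->
  is_block K ->
  (exists x : L, ~ K x /\ ~ is_bot_or_top x) ->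
  let P : L -> Prop := fun x => ~ K x \/ is_bot_or_top x in
  [/\ complete_block P, independent_blocks K P & (forall x : L, K x \/ P x)].
Proof.
move=> _ [Ksub [z Kz] [k [Kk Kkn]] Kcl] [w [Kw Kwn]] P.
have forceBT : forall x m, P x -> K m -> ~ is_bot_or_top m ->
    (m <= x \/ x <= m) -> is_bot_or_top x.
  move=> x m Px Km Kmn Hc; case: (bt_dec _ _ x) => // xn.
  case: Px => // nKx; exfalso; apply: nKx; exact: (Kcl m Km Kmn x Hc xn).
split.
- split; [|by right; left|by right; right].
  split.
  + move=> x y Px Py; split.
    * case: (bt_dec _ _ (x `&` y)) => [h|h]; [by right|left] => Km.
      have bx := forceBT x _ Px Km h (or_introl (leIl x y)).
      have bY := forceBT y _ Py Km h (or_introl (leIr y x)).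
      move: h; case: bx => ->; case: bY => ->;
        rewrite ?meet0x ?meetx0 ?meet1x => h; apply: h; by [left|right].
    * case: (bt_dec _ _ (x `|` y)) => [h|h]; [by right|left] => Km.
      have bx := forceBT x _ Px Km h (or_intror (leUl x y)).
      have bY := forceBT y _ Py Km h (or_intror (leUr y x)).
      move: h; case: bx => ->; case: bY => ->;
        rewrite ?join1x ?joinx1 ?join0x => h; apply: h; by [left|right].
  + exists k; case => // ; by [].
  + by exists w; split; [left|].
  + move=> m Pm Pmn x Hx xn; left => Kx.
    case: Pm => // nKm; apply: nKm.
    apply: (Kcl x Kx xn m _ Pmn).
    by case: Hx => H; [right|left].
- by move=> x Kx [].
- move=> x; case: (classic (K x)); [left|right; left].
  done. done.
Qed.
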